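(* Consider Method 3.1 (described in the context) and suppose it does not terminate. Then for every limit point $(\bar y,\bar\gamma)$ of the generated sequence $\{(y_i,\gamma_i)\}_{i\in K}$ one has $\bar y\in X^*$.
   Context: Setting: $f,F$ convex on $\mathbb{R}^n$; $D=\{x:F(x)\le0\}$ has nonempty interior; $f$ attains its minimum $f^*$ on $D$; $X^*=\{x\in D:f(x)=f^*\}$, $x^*\in X^*$ fixed; $K=\{0,1,\dots\}$; $\operatorname{epi}(f,\mathbb{R}^n)=\{(x,\gamma):\gamma\ge f(x)\}$; $W'(z,Q)=\{b\in\mathbb{R}^{n+1}:\|b\|=1,\ \langle b,u-z\rangle\le0\ \forall u\in Q\}$ for $Q\subset\mathbb{R}^{n+1}$, and $W''(t,L)=\{a\in\mathbb{R}^n:\|a\|=1,\ \langle a,y-t\rangle\le0\ \forall y\in L\}$ for $L\subset\mathbb{R}^n$. Method 3.1: choose a closed convex bounded $G_0\subset\mathbb{R}^n$ with $x^*\in G_0$ and a closed convex $M_0\subset\mathbb{R}^{n+1}$ with $\operatorname{epi}(f,\mathbb{R}^n)\subset M_0$; points $v'\in\operatorname{int}\operatorname{epi}(f,\mathbb{R}^n)$, $v''\in\operatorname{int}D$; a number $\alpha\le\min\{f(x):x\in G_0\}$; constants $q',q''\ge1$; $i=0$. Step 1: $u_i=(y_i,\gamma_i)$ solves $\min\{\gamma:(x,\gamma)\in M_i,\ x\in G_i,\ \gamma\ge\alpha\}$; if $y_i\in D$ and $f(y_i)=\gamma_i$ stop. Step 2: choose $z_i'$ in the open segment $(v',u_i)$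 with $z_i'\notin\operatorname{int}\operatorname{epi}(f,\mathbb{R}^n)$ and $u_i+q_i'(z_i'-u_i)\in\operatorname{epi}(f,\mathbb{R}^n)$ for some $q_i'\in[1,q']$. Step 3: choose nonempty finite $B_i\subset W'(z_i',\operatorname{epi}(f,\mathbb{R}^n))$; $M_{i+1}=M_i\cap\{u:\langle b,u-z_i'\rangle\le0\ \forall b\in B_i\}$. Step 4: if $y_i\in D$, set $G_{i+1}=G_i$ and go to Step 6; otherwise choose $z_i''\in(v'',y_i)$ with $z_i''\notin\operatorname{int}D$ and $y_i+q_i''(z_i''-y_i)\in D$ for some $q_i''\in[1,q'']$. Step 5: choose nonempty finite $A_i\subset W''(z_i'',D)$; $G_{i+1}=G_i\cap\{x:\langle a,x-z_i''\rangle\le0\ \forall a\in A_i\}$. Step 6: $i\leftarrow i+1$; go to Step 1. *)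

(* Defs.v *)
(* R^n is represented by row vectors 'rV[R]_n (R : realType),
   R^{n+1} by pairs 'rV[R]_n * R (point (x, gamma)). *)
From HB Require Import structures.
From mathcomp Require Import all_boot all_order all_algebra.
From mathcomp Require Import all_classical all_reals all_analysis.
Import Order.TTheory GRing.Theory Num.Theory.
Import numFieldTopology.Exports numFieldNormedType.Exports.

Set Implicit Arguments.
Unset Strict Implicit.
Unset Printing Implicit Defensive.

Local Open Scope ring_scope.
Local Open Scope classical_set_scope.

Section Defs.
Variables (R : realType) (n : nat).

Definition dot (x y : 'rV[R]_n) : R := \sum_(i < n) x ord0 i * y ord0 i.
Definition enorm (x : 'rV[R]_n) : R := Num.sqrt (dot x x).

Definition pdot (u v : 'rV[R]_n * R) : R := dot u.1 v.1 + u.2 * v.2.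
Definition penorm (u : 'rV[R]_n * R) : R := Num.sqrt (pdot u u).

Definition convex_fun (f : 'rV[R]_n -> R) : Prop :=
  forall (x y : 'rV[R]_n) (t : R), 0 <= t <= 1 ->
    f (t *: x + (1 - t) *: y) <= t * f x + (1 - t) * f y.

Definition convex_set_n (A : set 'rV[R]_n) : Prop :=
  forall (x y : 'rV[R]_n) (t : R), A x -> A y -> 0 <= t <= 1 ->
    A (t *: x + (1 - t) *: y).
Definition convex_set_n1 (A : set ('rV[R]_n * R)) : Prop :=
  forall (x y : 'rV[R]_n * R) (t : R), A x -> A y -> 0 <= t <= 1 ->
    A (t *: x + (1 - t) *: y).

Definition epi (f : 'rV[R]_n -> R) : set ('rV[R]_n * R) :=
  [set u | f u.1 <= u.2].

Definition feasible (F : 'rV[R]_n -> R) : set 'rV[R]_n := [set x | F x <= 0].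

Definition Xstar (f F : 'rV[R]_n -> R) : set 'rV[R]_n :=
  [set x | feasible F x /\ forall y, feasible F y -> f x <= f y].

Definition W1 (z : 'rV[R]_n * R) (Q : set ('rV[R]_n * R)) : set ('rV[R]_n * R) :=
  [set b | penorm b = 1 /\ forall u, Q u -> pdot b (u - z) <= 0].
Definition W2 (t : 'rV[R]_n) (L : set 'rV[R]_n) : set 'rV[R]_n :=
  [set a | enorm a = 1 /\ forall y, L y -> dot a (y - t) <= 0].

Definition oseg_n (v u : 'rV[R]_n) : set 'rV[R]_n :=
  [set z | exists t : R, 0 < t < 1 /\ z = v + t *: (u - v)].
Definition oseg_n1 (v u : 'rV[R]_n * R) : set ('rV[R]_n * R) :=
  [set z | exists t : R, 0 < t < 1 /\ z = v + t *: (u - v)].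

(* The data of one infinite (non-terminating) run of Method 3.1:
   u_i = (y i, gam i), z'_i = z1 i, q'_i = qq1 i, B_i = B i,
   z''_i = z2 i, q''_i = qq2 i, A_i = A i, M_i = M i, G_i = G i.
   (z2, qq2, A are only constrained at steps with y i \notin D.) *)
Definition method31_run (f F : 'rV[R]_n -> R)
  (G : nat -> set 'rV[R]_n) (M : nat -> set ('rV[R]_n * R))
  (v1 : 'rV[R]_n * R) (v2 : 'rV[R]_n) (alpha q1 q2 : R)
  (y : nat -> 'rV[R]_n) (gam : nat -> R)
  (z1 : nat -> 'rV[R]_n * R) (qq1 : nat -> R) (B : nat -> seq ('rV[R]_n * R))
  (z2 : nat -> 'rV[R]_n) (qq2 : nat -> R) (A : nat -> seq 'rV[R]_n) : Prop :=
  forall i : nat,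
  (* Step 1: u_i solves min{gamma : (x,gamma) in M_i, x in G_i, gamma >= alpha} *)
  [/\ M i (y i, gam i), G i (y i), alpha <= gam i &
      forall x g, M i (x, g) -> G i x -> alpha <= g -> gam i <= g]
  (* the stopping test of Step 1 fails (the method does not terminate) *)
  /\ ~ (feasible F (y i) /\ f (y i) = gam i)
  /\ [/\ oseg_n1 v1 (y i, gam i) (z1 i), ~ interior (epi f) (z1 i),
         1 <= qq1 i <= q1 &
         epi f ((y i, gam i) + qq1 i *: (z1 i - (y i, gam i)))]
  /\ [/\ B i != [::], (forall b, b \in B i -> W1 (z1 i) (epi f) b) &
         M i.+1 = M i `&` [set u | forall b, b \in B i -> pdot b (u - z1 i) <= 0]]
  /\ (feasible F (y i) -> G i.+1 = G i)
  /\ (~ feasible F (y i) ->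
       [/\ oseg_n v2 (y i) (z2 i), ~ interior (feasible F) (z2 i),
           1 <= qq2 i <= q2 & feasible F (y i + qq2 i *: (z2 i - y i))]
       /\ [/\ A i != [::], (forall a, a \in A i -> W2 (z2 i) (feasible F) a) &
           G i.+1 = G i `&` [set x | forall a, a \in A i -> dot a (x - z2 i) <= 0]]).

Definition seq_limit_point (y : nat -> 'rV[R]_n) (gam : nat -> R)
  (ybar : 'rV[R]_n) (gbar : R) : Prop :=
  exists phi : nat -> nat, (forall k, (phi k < phi k.+1)%N) /\
    (fun k => (y (phi k), gam (phi k))) @ \oo --> (ybar, gbar).

End Defs.

(* Main.v *)
Require Import Defs.
From HB Require Import structures.
From mathcomp Require Import all_boot all_order all_algebra.
From mathcomp Require Import all_classical all_reals all_analysis.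
From mathcomp Require Import ring lra.
Import Order.TTheory GRing.Theory Num.Theory.
Import numFieldTopology.Exports numFieldNormedType.Exports.
Local Open Scope ring_scope.
Local Open Scope classical_set_scope.

Section H.
Variables (R : realType) (n : nat).
Implicit Types (x a d : 'rV[R]_n) (u b w : 'rV[R]_n * R).

Lemma coord_le (x : 'rV[R]_n) i : `|x ord0 i| <= `|x|.
Proof.
change (`|x|) with (mx_norm x); rewrite mx_normrE.
exact: (le_bigmax _ (fun ij : 'I_1 * 'I_n => `|x ij.1 ij.2|) (ord0, i)).
Qed.
Lemma dotD a x d : dot a (x + d) = dot a x + dot a d.
Proof. by rewrite /dot -big_split; apply: eq_bigr => i _; rewrite mxE mulrDr. Qed.
Lemma dotZ a c d : dot a (c *: d) = c * dot a d.
Proof. by rewrite /dot mulr_sumr; apply: eq_bigr => i _; rewrite mxE mulrCA. Qed.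
Lemma dotN a d : dot a (- d) = - dot a d.
Proof. by rewrite -scaleN1r dotZ mulN1r. Qed.
Lemma dotB a x d : dot a (x - d) = dot a x - dot a d.
Proof. by rewrite dotD dotN. Qed.
Lemma pdotD b u w : pdot b (u + w) = pdot b u + pdot b w.
Proof. by rewrite /pdot /= dotD mulrDr addrACA. Qed.
Lemma pdotZ b c w : pdot b (c *: w) = c * pdot b w.
Proof. by rewrite /pdot /= dotZ mulrCA mulrDr. Qed.
Lemma pdotN b w : pdot b (- w) = - pdot b w.
Proof. by rewrite -scaleN1r pdotZ mulN1r. Qed.
Lemma pdotB b u w : pdot b (u - w) = pdot b u - pdot b w.
Proof. by rewrite pdotD pdotN. Qed.

Lemma dot_ge0 a : 0 <= dot a a.
Proof. by apply: sumr_ge0 => i _; rewrite -expr2 sqr_ge0. Qed.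

Lemma dot_coord a i : a ord0 i ^+ 2 <= dot a a.
Proof.
rewrite /dot (bigD1 i) //= expr2 lerDl.
by apply: sumr_ge0 => j _; rewrite -expr2 sqr_ge0.
Qed.

Lemma sqrt_eq1 (t : R) : 0 <= t -> Num.sqrt t = 1 -> t = 1.
Proof. by move=> t0 h; rewrite -(sqr_sqrtr t0) h expr1n. Qed.

Lemma enorm1_dot a : enorm a = 1 -> dot a a = 1.
Proof. rewrite /enorm => h; exact: (sqrt_eq1 _ (dot_ge0 a) h). Qed.

Lemma pdot_ge0 b : 0 <= pdot b b.
Proof. by rewrite /pdot addr_ge0 ?dot_ge0 // -expr2 sqr_ge0. Qed.

Lemma penorm1_dot b : penorm b = 1 -> pdot b b = 1.
Proof. rewrite /penorm => h; exact: (sqrt_eq1 _ (pdot_ge0 b) h). Qed.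

Lemma sq_le1 (t : R) : t ^+ 2 <= 1 -> `|t| <= 1.
Proof. move=> h; rewrite -(ler_pXn2r (_ : 0 < 2)%N) ?nnegrE //; rewrite real_normK ?num_real //; by rewrite expr1n. Qed.

Lemma enorm1_coord a i : enorm a = 1 -> `|a ord0 i| <= 1.
Proof. by move/enorm1_dot => h; apply: sq_le1; rewrite -h dot_coord. Qed.

Lemma penorm1_coord b i : penorm b = 1 -> `|b.1 ord0 i| <= 1.
Proof.
move/penorm1_dot => h; apply: sq_le1; rewrite -h /pdot.
by rewrite (le_trans (dot_coord _ i)) // lerDl -expr2 sqr_ge0.
Qed.

Lemma penorm1_snd b : penorm b = 1 -> `|b.2| <= 1.
Proof.
move/penorm1_dot => h; apply: sq_le1; rewrite -h /pdot expr2 lerDr dot_ge0 //.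
Qed.
Lemma dot_le a d : enorm a = 1 -> dot a d <= n%:R * `|d|.
Proof.
move=> h; rewrite /dot -[n in n%:R]card_ord -sum1_card natr_sum mulr_suml.
apply: ler_sum => i _; rewrite mul1r.
apply: (le_trans (ler_norm _)); rewrite normrM.
apply: (le_trans (ler_wpM2r (normr_ge0 _) (enorm1_coord _ i h))).
by rewrite mul1r coord_le.
Qed.

Lemma pdot_le b w : penorm b = 1 -> pdot b w <= n.+1%:R * `|w|.
Proof.
move=> h; have -> : n.+1%:R = n%:R + 1 :> R by rewrite -addn1 natrD.
rewrite /pdot mulrDl mul1r.
have hw1 : `|w.1| <= `|w| by rewrite prod_normE le_max lexx.
have hw2 : `|w.2| <= `|w| by rewrite prod_normE le_max lexx orbT.
apply: lerD.
  rewrite /dot -[n in n%:R]card_ord -sum1_card natr_sum mulr_suml.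
  apply: ler_sum => i _; rewrite mul1r.
  apply: (le_trans (ler_norm _)); rewrite normrM.
  apply: (le_trans (ler_wpM2r (normr_ge0 _) (penorm1_coord _ i h))).
  by rewrite mul1r (le_trans (coord_le _ i)).
apply: (le_trans (ler_norm _)); rewrite normrM.
apply: (le_trans (ler_wpM2r (normr_ge0 _) (penorm1_snd _ h))).
by rewrite mul1r.
Qed.

Lemma enorm1_norm a : enorm a = 1 -> `|a| <= 1.
Proof.
move=> h; change (`|a|) with (mx_norm a); rewrite mx_normrE.
apply: bigmax_le => // -[i j] _ /=.
by rewrite (ord1 i) enorm1_coord.
Qed.

Lemma penorm1_norm b : penorm b = 1 -> `|b| <= 1.
Proof.
move=> h; rewrite prod_normE ge_max penorm1_snd // andbT.
change (`|b.1|) with (mx_norm b.1); rewrite mx_normrE.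
apply: bigmax_le => // -[i j] _ /=.
by rewrite (ord1 i) penorm1_coord.
Qed.
Lemma int_ball (V : normedModType R) (S : set V) (v : V) :
  interior S v -> exists2 r, 0 < r & forall w0 : V, `|v - w0| < r -> S w0.
Proof.
move=> /nbhs_normP [r r0 hr]; exists r => // w0 hw; apply: hr.

Qed.

Lemma cvg_eps (V : normedModType R) (u : nat -> V) (l : V) :
  u @ \oo --> l -> forall e, 0 < e -> exists N, forall k, (N <= k)%N -> `|l - u k| < e.
Proof.
move=> /cvgrPdist_lt h e e0; have [N _ hN] := h e e0.
by exists N => k hk; apply: hN.
Qed.
Lemma le_of_small (d K : R) :
  (forall s, 0 < s < 1 -> (1 + s) * d <= s * K) -> d <= 0.
Proof.
move=> h; rewrite leNgt; apply/negP => d0.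
pose K' : R := `|K| + 1.
have K'0 : 0 < K' by rewrite /K' ltr_wpDl.
have KK : K <= K' by rewrite /K' (le_trans (ler_norm K)) // lerDl.
pose s : R := Num.min (2^-1) (d / (2 * K')).
have s0 : 0 < s by rewrite lt_min invr_gt0 ltr0n divr_gt0 // mulr_gt0.
have s1 : s < 1 by rewrite gt_min; apply/orP; left; rewrite invf_lt1 // ltr1n.
have s2 : s <= d / (2 * K') by rewrite ge_min lexx orbT.
have := h s; rewrite s0 s1 => /(_ isT) hs.
have : s * K' <= d / 2.
  rewrite -(ler_pM2r K'0) in s2.
  have e : d / (2 * K') * K' = d / 2 by field; rewrite gt_eqF.
  by rewrite -e.
move=> hsK.
have : s * K <= s * K' by rewrite ler_pM2l.
nra.
Qed.
Lemma closure_conv (f : 'rV[R]_n -> R) (v ybar : 'rV[R]_n) (c r gbar : R) :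
 convex_fun f -> 0 < r -> (forall x0 : 'rV[R]_n, `|v - x0| < r -> f x0 <= c) ->
 (forall e, 0 < e -> exists p g, f p <= g /\ `|ybar - p| < e /\ `|gbar - g| < e) ->
 f ybar <= gbar.
Proof.
move=> cf r0 hb ha.
have H : forall s, 0 < s < 1 ->
    f (s *: v + (1 - s) *: ybar) <= s * (c + 1) + (1 - s) * gbar.
  move=> s /andP[s0 s1].
  pose r' : R := Num.min r 1.
  have r'0 : 0 < r' by rewrite lt_min r0 ltr01.
  have r'r : r' <= r by rewrite ge_min lexx.
  have r'1 : r' <= 1 by rewrite ge_min lexx orbT.
  have [p [g [fpg [hp hg]]]] := ha (s * r') (mulr_gt0 s0 r'0).
  pose q := v + ((1 - s) / s) *: (ybar - p).
  have hq : f q <= c.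
    apply: hb; rewrite /q opprD addrA subrr add0r normrN normrZ.
    have -> : `|(1 - s) / s| = (1 - s) / s.
      by rewrite ger0_norm // divr_ge0 // ?subr_ge0 ltW.
    have : (1 - s) / s * `|ybar - p| < (1 - s) / s * (s * r').
      by rewrite ltr_pM2l // divr_gt0 // subr_gt0.
    have -> : (1 - s) / s * (s * r') = (1 - s) * r' by field; rewrite gt_eqF.
    move=> h; apply: (lt_le_trans h); nra.
  have e : s *: q + (1 - s) *: p = s *: v + (1 - s) *: ybar.
    apply/rowP => i; rewrite /q !mxE; field; rewrite gt_eqF //.
  have := cf q p s; rewrite e (ltW s0) (ltW s1) => /(_ isT) hc.
  have hg' : g - gbar <= `|gbar - g| by rewrite distrC ler_norm.
  have h1 : s * f q <= s * c by rewrite ler_pM2l.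
  have h2 : (1 - s) * f p <= (1 - s) * g by rewrite ler_wpM2l // subr_ge0 ltW.
  have h3 : (1 - s) * g <= (1 - s) * (gbar + s * r') by rewrite ler_wpM2l ?subr_ge0 ?ltW //; lra.
  have h4 : (1 - s) * (s * r') <= s by nra.
  lra.
pose P := ybar + (ybar - v).
rewrite -subr_le0; apply: (le_of_small _ (c + 1 + f P - 2 * gbar)) => s /andP[s0 s1].
pose t : R := (1 + s)^-1.
have sp : 0 < 1 + s by lra.
have ht : (1 + s) * t = 1 by rewrite /t mulfV // gt_eqF.
have t0 : 0 <= t by rewrite /t invr_ge0 ltW.
have t1 : t <= 1 by rewrite /t invf_le1 // lerDl ltW.
have e : t *: (s *: v + (1 - s) *: ybar) + (1 - t) *: P = ybar.
  apply/rowP => i; rewrite /P /t !mxE; field; rewrite gt_eqF //.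
have := cf (s *: v + (1 - s) *: ybar) P t; rewrite e t0 t1 => /(_ isT) hc.
have hX := H s (andb_true_intro (conj s0 s1)).
have h5 : (1 + s) * f ybar <= (1 + s) * (t * f (s *: v + (1 - s) *: ybar) + (1 - t) * f P).
  by rewrite ler_wpM2l // addr_ge0 // ltW.
have h6 : (1 + s) * (t * f (s *: v + (1 - s) *: ybar) + (1 - t) * f P) =
   f (s *: v + (1 - s) *: ybar) + s * f P.
  by rewrite mulrDr !mulrA ht mul1r mulrBr mulr1 ht; congr (_ + _ * _); lra.
lra.
Qed.
Lemma cut_bound (V : normedModType R) (ip : V -> R) (C K r t : R) (v u u' z : V) :
 (forall p1 p2, ip (p1 + p2) = ip p1 + ip p2) -> (forall c p1, ip (c *: p1) = c * ip p1) ->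
 (forall dd, ip dd <= C * `|dd|) -> 0 < r -> 0 < t < 1 -> z = v + t *: (u - v) ->
 ip (v - z) <= - r -> ip (u' - z) <= 0 -> `|u - v| <= K ->
 r * `|u - z| <= K * C * `|u - u'|.
Proof.
move=> ipD ipZ ipC r0 /andP[t0 t1] hz hv hu' hK.
have ipN p1 : ip (- p1) = - ip p1 by rewrite -scaleN1r ipZ mulN1r.
have e1 : u - z = (1 - t) *: (u - v).
  by rewrite hz opprD addrA scalerBl scale1r.
have e2 : v - z = - (t *: (u - v)).
  by rewrite hz opprD addrA subrr add0r.
have e3 : u - z = (u - u') + (u' - z) by rewrite addrA subrK.
have hb : r <= t * ip (u - v) by move: hv; rewrite e2 ipN ipZ; lra.
have hnz : `|u - z| = (1 - t) * `|u - v| by rewrite e1 normrZ ger0_norm // subr_ge0 ltW.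
have hipz : ip (u - z) = (1 - t) * ip (u - v) by rewrite e1 ipZ.
have hipz2 : ip (u - z) <= C * `|u - u'| by rewrite e3 ipD; have := ipC (u - u'); lra.
have K0 : 0 <= K by apply: le_trans hK.
have hm : 0 <= `|u - v| by [].
have hbet : r <= ip (u - v) by nra.
have h1 : r * `|u - z| <= ip (u - v) * ((1 - t) * K).
  rewrite hnz; apply: ler_pM => //; first exact: ltW.
    by rewrite mulr_ge0 // subr_ge0 ltW.
  by rewrite ler_wpM2l // subr_ge0 ltW.
have h2 : ip (u - v) * ((1 - t) * K) = K * ip (u - z) by rewrite hipz; ring.
rewrite h2 in h1; apply: (le_trans h1); rewrite -mulrA; exact: ler_wpM2l.
Qed.
Lemma approx_gen (V : normedModType R) (S : set V) (us : nat -> V) (ubar v : V)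
  (r1 C q1 : R) :
 0 < r1 -> 0 <= C -> 1 <= q1 ->
 (forall e, 0 < e -> exists N, forall k, (N <= k)%N -> `|ubar - us k| < e) ->
 (forall k, S (us k) \/ exists (ip : V -> R) (t q : R) (z : V),
     [/\ (forall p1 p2, ip (p1 + p2) = ip p1 + ip p2),
         (forall c p1, ip (c *: p1) = c * ip p1),
         (forall dd, ip dd <= C * `|dd|), 0 < t < 1 & z = v + t *: (us k - v)] /\
     [/\ ip (v - z) <= - r1, ip (us k.+1 - z) <= 0, 1 <= q <= q1 &
         S (us k + q *: (z - us k))]) ->
 forall e, 0 < e -> exists2 p, S p & `|ubar - p| < e.
Proof.
move=> r0 C0 q10 hc hk e e0.
pose K : R := `|ubar - v| + 1.
have K0 : 0 <= K by rewrite addr_ge0.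
pose L : R := q1 * (K * C / r1) * 2.
have L0 : 0 <= L.
  have q0 : 0 <= q1 by lra.
  by rewrite /L !mulr_ge0 // ?invr_ge0 ?ltW.
have L1 : 0 < 1 + L by lra.
pose de : R := Num.min 1 (e / (2 * (1 + L))).
have de0 : 0 < de by rewrite lt_min ltr01 divr_gt0 // mulr_gt0.
have de1 : de <= 1 by rewrite ge_min lexx.
have de2 : de <= e / (2 * (1 + L)) by rewrite ge_min lexx orbT.
have hde : (1 + L) * de <= e / 2.
  have -> : e / 2 = (1 + L) * (e / (2 * (1 + L))) by field; rewrite gt_eqF.
  by rewrite ler_wpM2l // ltW.
have hde' : de <= (1 + L) * de by nra.
have [N hN] := hc de de0.
have h1 := hN N (leqnn N).
have h2 := hN N.+1 (leqnSn N).
case: (hk N) => [hS | [ip [t [q [z [[ipD ipZ ipC ht hz] [hv hu hq hSw]]]]]]].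
  by exists (us N) => //; lra.
exists (us N + q *: (z - us N)) => //.
have hK : `|us N - v| <= K.
  apply: (le_trans (ler_distD ubar _ _)); rewrite distrC /K.
  rewrite addrC lerD2l; lra.
have hcb := cut_bound _ _ _ _ _ _ _ _ _ _ ipD ipZ ipC r0 ht hz hv hu hK.
have huu : `|us N - us N.+1| <= 2 * de.
  apply: (le_trans (ler_distD ubar _ _)); rewrite distrC; lra.
have hX : r1 * `|us N - z| <= K * C * (2 * de).
  apply: (le_trans hcb); rewrite ler_wpM2l // mulr_ge0 //.
have hX2 : `|us N - z| <= K * C * (2 * de) / r1.
  by rewrite ler_pdivlMr // mulrC.
have hq0 : 0 <= q by lra.
have hX3 : `|q *: (z - us N)| <= L * de.
  rewrite normrZ ger0_norm // distrC.
  have -> : L * de = q1 * (K * C * (2 * de) / r1) by rewrite /L; ring.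
  apply: ler_pM => //; lra.
have := ler_distD (us N) ubar (us N + q *: (z - us N)).
have ee : us N - (us N + q *: (z - us N)) = - (q *: (z - us N)).
  by rewrite opprD addrA subrr add0r.
rewrite ee normrN => hh.
lra.
Qed.
End H.

Arguments pdotD {R n}. Arguments pdotZ {R n}. Arguments pdot_le {R n}.
Arguments penorm1_dot {R n}. Arguments penorm1_norm {R n}.
Arguments dotD {R n}. Arguments dotZ {R n}. Arguments dot_le {R n}.
Arguments enorm1_dot {R n}. Arguments enorm1_norm {R n}.
Arguments int_ball {R V S v}. Arguments cvg_eps {R V u l}.
Arguments closure_conv {R n f v ybar c r gbar}.
Arguments approx_gen {R V S us ubar v r1 C q1}.

Theorem theorem3p1p2 (R : realType) (n : nat) (f F : 'rV[R]_n -> R)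
  (xstar : 'rV[R]_n)
  (G : nat -> set 'rV[R]_n) (M : nat -> set ('rV[R]_n * R))
  (v1 : 'rV[R]_n * R) (v2 : 'rV[R]_n) (alpha q1 q2 : R)
  (y : nat -> 'rV[R]_n) (gam : nat -> R)
  (z1 : nat -> 'rV[R]_n * R) (qq1 : nat -> R) (B : nat -> seq ('rV[R]_n * R))
  (z2 : nat -> 'rV[R]_n) (qq2 : nat -> R) (A : nat -> seq 'rV[R]_n)
  (ybar : 'rV[R]_n) (gbar : R) :
  convex_fun f -> convex_fun F ->
  interior (feasible F) !=set0 ->
  Xstar f F xstar ->
  closed (G 0%N) -> convex_set_n (G 0%N) -> bounded_set (G 0%N) -> G 0%N xstar ->
  closed (M 0%N) -> convex_set_n1 (M 0%N) -> epi f `<=` M 0%N ->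
  interior (epi f) v1 -> interior (feasible F) v2 ->
  (forall x, G 0%N x -> alpha <= f x) ->
  1 <= q1 -> 1 <= q2 ->
  method31_run f F G M v1 v2 alpha q1 q2 y gam z1 qq1 B z2 qq2 A ->
  seq_limit_point y gam ybar gbar ->
  Xstar f F ybar.
Proof.
move=> cf cF _ hX _ _ _ G0x _ _ epiM v1i v2i halpha q1ge q2ge hrun [phi [hphi hcv]].
have Mstep i : M i.+1 `<=` M i.
  have [_ [_ [_ [[_ _ hM] _]]]] := hrun i.
  by rewrite hM => u [].
have Gstep i : G i.+1 `<=` G i.
  have [_ [_ [_ [_ [hGD hGnD]]]]] := hrun i.
  have [hf|hf] := pselect (feasible F (y i)); first by rewrite hGD.
  have [_ [_ _ ->]] := hGnD hf; by move=> x [].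
have Mmono i j : (i <= j)%N -> M j `<=` M i.
  move=> /subnKC <-; elim: (j - i)%N => [|k ih]; first by rewrite addn0.
  by rewrite addnS => u /Mstep /ih.
have Gmono i j : (i <= j)%N -> G j `<=` G i.
  move=> /subnKC <-; elim: (j - i)%N => [|k ih]; first by rewrite addn0.
  by rewrite addnS => u /Gstep /ih.
have epiMi i : epi f `<=` M i.
  elim: i => [//|i ih].
  have [_ [_ [_ [[_ hBW hM] _]]]] := hrun i.
  rewrite hM => u hu; split; first exact: ih.
  by move=> b /hBW [_ hb]; apply: hb.
have Gxi i : G i xstar.
  elim: i => [//|i ih].
  have [_ [_ [_ [_ [hGD hGnD]]]]] := hrun i.
  have [hf|hf] := pselect (feasible F (y i)); first by rewrite hGD.
  have [_ [_ hAW ->]] := hGnD hf; split => // a /hAW [_ ha]; apply: ha.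
  exact: hX.1.
have gam_le i : gam i <= f xstar.
  have [[_ _ _ hmin] _] := hrun i.
  apply: hmin; [by apply: epiMi; rewrite /epi /= | exact: Gxi | exact: halpha].
have hc := cvg_eps hcv.
have hg : gbar <= f xstar.
  apply/ler_addgt0Pr => e e0.
  have [N hN] := hc e e0; have := hN N (leqnn N).
  rewrite prod_normE gt_max => /andP[_ /= h2].
  have := gam_le (phi N); have := ler_norm (gbar - gam (phi N)); lra.
have [r r0 hr] := int_ball v1i.
have r20 : 0 < r / 2 by rewrite divr_gt0.
have C0 : 0 <= n.+1%:R :> R by [].
have hk : forall k, epi f (y (phi k), gam (phi k)) \/
    exists (ip : 'rV[R]_n * R -> R) (t q : R) (z : 'rV[R]_n * R),
     [/\ (forall p1 p2, ip (p1 + p2) = ip p1 + ip p2),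
         (forall c p1, ip (c *: p1) = c * ip p1),
         (forall dd, ip dd <= n.+1%:R * `|dd|), 0 < t < 1 &
         z = v1 + t *: ((y (phi k), gam (phi k)) - v1)] /\
     [/\ ip (v1 - z) <= - (r / 2),
         ip ((y (phi k.+1), gam (phi k.+1)) - z) <= 0, 1 <= q <= q1 &
         epi f ((y (phi k), gam (phi k)) + q *: (z - (y (phi k), gam (phi k))))].
  move=> k; right.
  have [_ [_ [[hseg _ hq1 hepi] [[hBne hBW hM] _]]]] := hrun (phi k).
  have [b hb] : exists b, b \in B (phi k).
    by move: hBne; case: (B (phi k)) => [//|b0 l _]; exists b0; rewrite inE eqxx.
  have [hb1 hbW] := hBW b hb.
  have [t [ht hz]] := hseg.
  exists (pdot b), t, (qq1 (phi k)), (z1 (phi k)); split; split => //.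
  - exact: pdotD b.
  - exact: pdotZ b.
  - by move=> dd; apply: pdot_le b dd hb1.
  - have hw : epi f (v1 + (r / 2) *: b).
      apply: hr; rewrite opprD addrA subrr add0r normrN normrZ ger0_norm ?ltW //.
      have := penorm1_norm b hb1; have := normr_ge0 b; nra.
    have := hbW _ hw.
    have -> : v1 + (r / 2) *: b - z1 (phi k) = (v1 - z1 (phi k)) + (r / 2) *: b.
      by rewrite addrAC.
    rewrite pdotD pdotZ penorm1_dot //; lra.
  - have [[hMj _ _ _] _] := hrun (phi k.+1).
    have := Mmono _ _ (hphi k) _ hMj.
    by rewrite hM => -[_ hcut]; apply: hcut.
have happ := approx_gen r20 C0 q1ge hc hk.
have hfy : f ybar <= gbar.
  apply: (closure_conv (v := v1.1) (c := v1.2) cf r0).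
    move=> x0 hx0; apply: (hr (x0, v1.2)).
    by rewrite prod_normE /= subrr normr0 gt_max hx0.
  move=> e e0; have [p hp hpe] := happ e e0; exists p.1, p.2; split => //.
  by move: hpe; rewrite prod_normE gt_max => /andP[h1 h2].
have [r' r'0 hr'] := int_ball v2i.
have r'20 : 0 < r' / 2 by rewrite divr_gt0.
have C0' : 0 <= n%:R :> R by [].
have hc2 : forall e, 0 < e -> exists N, forall k, (N <= k)%N -> `|ybar - y (phi k)| < e.
  move=> e e0; have [N hN] := hc e e0; exists N => k hk'.
  by move: (hN k hk'); rewrite prod_normE gt_max => /andP[].
have hk2 : forall k, feasible F (y (phi k)) \/
    exists (ip : 'rV[R]_n -> R) (t q : R) (z : 'rV[R]_n),
     [/\ (forall p1 p2, ip (p1 + p2) = ip p1 + ip p2),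
         (forall c p1, ip (c *: p1) = c * ip p1),
         (forall dd, ip dd <= n%:R * `|dd|), 0 < t < 1 &
         z = v2 + t *: (y (phi k) - v2)] /\
     [/\ ip (v2 - z) <= - (r' / 2),
         ip (y (phi k.+1) - z) <= 0, 1 <= q <= q2 &
         feasible F (y (phi k) + q *: (z - y (phi k)))].
  move=> k; have [hf|hf] := pselect (feasible F (y (phi k))); [left => // | right].
  have [_ [_ [_ [_ [_ hGnD]]]]] := hrun (phi k).
  have [[hseg _ hq2 hfeas] [hAne hAW hG]] := hGnD hf.
  have [a ha] : exists a, a \in A (phi k).
    by move: hAne; case: (A (phi k)) => [//|a0 l _]; exists a0; rewrite inE eqxx.
  have [ha1 haW] := hAW a ha.
  have [t [ht hz]] := hseg.
  exists (dot a), t, (qq2 (phi k)), (z2 (phi k)); split; split => //.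
  - exact: dotD a.
  - exact: dotZ a.
  - by move=> dd; apply: dot_le a dd ha1.
  - have hw : feasible F (v2 + (r' / 2) *: a).
      apply: hr'; rewrite opprD addrA subrr add0r normrN normrZ ger0_norm ?ltW //.
      have := enorm1_norm a ha1; have := normr_ge0 a; nra.
    have := haW _ hw.
    have -> : v2 + (r' / 2) *: a - z2 (phi k) = (v2 - z2 (phi k)) + (r' / 2) *: a.
      by rewrite addrAC.
    rewrite dotD dotZ enorm1_dot //; lra.
  - have [[_ hGj _ _] _] := hrun (phi k.+1).
    have := Gmono _ _ (hphi k) _ hGj.
    by rewrite hG => -[_ hcut]; apply: hcut.
have happ2 := approx_gen r'20 C0' q2ge hc2 hk2.
have hFy : F ybar <= 0.
  apply: (closure_conv (v := v2) (c := 0) cF r'0) => //.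
  move=> e e0; have [p hp hpe] := happ2 e e0; exists p, 0; split => //.
  by rewrite subrr normr0.
split => // y0 hy0; have := hX.2 y0 hy0; lra.
Qed.
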